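(* Let $\mathcal{M}$ be a finite $\mathcal{R}$-trivial monoid with generating set $\mathcal{S}$, let $R$ be a ring with $1\neq 0$, and let $\sigma\in\mathcal{M}$. Let $$T_{[\sigma]}:=\prod_{\tau\in\mathcal{L}^{\mathcal{S}}_\sigma} U_\tau\prod_{\kappa\in\mathcal{S}\setminus\mathcal{L}^{\mathcal{S}}_\sigma}(\mathrm{Id}-U_\kappa)\in\mathrm{Mat}(R,n),$$ with the factors multiplied in any order. Then for every $\mu\in\mathcal{M}$, $(T_{[\sigma]})_{\mu,\mu}=1$ if $\mu\sim\sigma$ and $(T_{[\sigma]})_{\mu,\mu}=0$ otherwise; this holds independently of the order of the factors.
   Context: $\mathcal{M}$ is $\mathcal{R}$-trivial: $\sigma\mathcal{M}=\tau\mathcal{M}$ implies $\sigma=\tau$; $n=\#\mathcal{M}$, and its elements are ordered so that $\#\sigma_1\mathcal{M}\ge\dots\ge\#\sigma_n\mathcal{M}$, with matrix entries indexed by elements of $\mathcal{M}$. $U_\sigma$ is the matrix with $(U_\sigma)_{\tau,\kappa}=1$ if $\tau\sigma=\kappa$ and $0$ otherwise. $\mathcal{L}_\sigma:=\{\tau\in\mathcal{M}:\sigma\tau=\sigma\}$, $\mathcal{L}^{\mathcal{S}}_\sigma:=\mathcal{L}_\sigma\cap\mathcal{S}$, and $\mu\sim\sigma$ (same loop-type) iff $\mathcal{L}_\mu=\mathcal{L}_\sigma$. *)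

(* Defs.v *)
From HB Require Import structures.
From mathcomp Require Import all_boot all_order all_algebra.
Set Implicit Arguments. Unset Strict Implicit. Unset Printing Implicit Defensive.
Import GRing.Theory.
Local Open Scope ring_scope.

Definition is_monoid (T : finType) (mul : T -> T -> T) (one : T) : Prop :=
  associative mul /\ left_id one mul /\ right_id one mul.

Definition rideal (T : finType) (mul : T -> T -> T) (s : T) : {set T} :=
  [set mul s m | m : T].

Definition R_trivial (T : finType) (mul : T -> T -> T) : Prop :=
  forall s t : T, rideal mul s = rideal mul t -> s = t.

Definition generates (T : finType) (mul : T -> T -> T) (one : T) (S : {set T}) : Prop :=
  forall x : T, exists w : seq T, all (fun y => y \in S) w /\ x = foldr mul one w.

Definition loopset (T : finType) (mul : T -> T -> T) (s : T) : {set T} :=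
  [set t | mul s t == s].

Definition Umx (R : nzRingType) (T : finType) (mul : T -> T -> T)
    (e : 'I_#|T| -> T) (s : T) : 'M[R]_#|T| :=
  \matrix_(i, j) (mul (e i) s == e j)%:R.

(* T_[sigma] with factors taken in the order given by the sequence w *)
Definition Tsigma (R : nzRingType) (T : finType) (mul : T -> T -> T)
    (e : 'I_#|T| -> T) (S : {set T}) (s : T) (w : seq T) : 'M[R]_#|T| :=
  \big[mulmx/1%:M]_(k <- w)
     (if k \in loopset mul s :&: S then Umx R mul e k else 1%:M - Umx R mul e k).

(* Main.v *)
Require Import Defs.
From HB Require Import structures.
From mathcomp Require Import all_boot all_order all_algebra.
Import GRing.Theory.
Set Implicit Arguments. Unset Strict Implicit.
Local Open Scope ring_scope.

Section Aux.
Variable R : nzRingType.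

Definition upper n (A : 'M[R]_n) := forall i j : 'I_n, (j < i)%N -> A i j = 0.

Lemma upper_mul n (A B : 'M[R]_n) : upper A -> upper B ->
  upper (A *m B) /\ forall i, (A *m B) i i = A i i * B i i.
Proof.
move=> uA uB; split.
  move=> i j ji; rewrite mxE big1 // => k _.
  case: (ltnP k i) => ki; first by rewrite uA // mul0r.
  by rewrite uB ?mulr0 // (leq_trans ji ki).
move=> i; rewrite mxE (bigD1 i) //= big1 ?addr0 // => k ki.
case: (ltngtP k i) => h; first by rewrite uA // mul0r.
  by rewrite uB ?mulr0.
by move/eqP: ki; case; apply/val_inj.
Qed.

Lemma big_upper n (T : Type) (F : T -> 'M[R]_n) (P : 'I_n -> T -> bool) (w : seq T) :
  (forall k, upper (F k)) -> (forall k i, F k i i = (P i k)%:R) ->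
  upper (\big[mulmx/1%:M]_(k <- w) F k) /\
  forall i, (\big[mulmx/1%:M]_(k <- w) F k) i i = (all (P i) w)%:R.
Proof.
move=> uF dF; elim: w => [|x w [IHu IHd]].
  rewrite big_nil; split; last by move=> i; rewrite mxE eqxx.
  by move=> i j ji; rewrite mxE; case: eqP => // h; rewrite h ltnn in ji.
rewrite big_cons; have [u d] := upper_mul (uF x) IHu; split => // i.
by rewrite d IHd dF /=; case: (P i x); rewrite ?mul1r ?mul0r.
Qed.
End Aux.

Section Mon.
Variables (T : finType) (mul : T -> T -> T) (one : T).
Hypothesis monT : is_monoid mul one.
Hypothesis RT : R_trivial mul.

Lemma prefix_loop m a r : mul m (mul a r) = m -> mul m a = m /\ mul m r = m.
Proof.
case: monT => [A _] h.
have ma : mul m a = m.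
  apply: RT; apply/setP => x; rewrite /rideal; apply/imsetP/imsetP => -[y _ ->].
    by exists (mul a y) => //; rewrite A.
  by exists (mul r y) => //; rewrite -{1}h !A.
by split=> //; rewrite -{2}h A ma.
Qed.

Lemma loop_word m ws : mul m (foldr mul one ws) = m -> all (fun y => mul m y == m) ws.
Proof.
elim: ws => //= a r IH /prefix_loop [-> hr]; rewrite eqxx /=; exact: IH.
Qed.

Lemma word_loop m ws : all (fun y => mul m y == m) ws -> mul m (foldr mul one ws) = m.
Proof.
case: monT => [A [_ r1]].
elim: ws => /= [|a r IH]; first by rewrite r1.
by case/andP => /eqP h /IH; rewrite A h.
Qed.
End Mon.

Theorem mainTheorem7 (T : finType) (mul : T -> T -> T) (one : T)
    (S : {set T}) (R : nzRingType) (sigma : T)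
    (e : 'I_#|T| -> T) (w : seq T) :
  is_monoid mul one ->
  R_trivial mul ->
  generates mul one S ->
  bijective e ->
  (forall i j : 'I_#|T|, (i <= j)%N -> #|rideal mul (e j)| <= #|rideal mul (e i)|)%N ->
  perm_eq w (enum S) ->
  forall i : 'I_#|T|,
    Tsigma R mul e S sigma w i i =
      (if loopset mul (e i) == loopset mul sigma then 1 else 0).
Proof.
move=> monT RT gen bij ord pw i.
have inj := bij_inj bij.
have [A _] := monT.
have Uup k : upper (Umx R mul e k).
  move=> a b ba; rewrite mxE; case: eqP => //= h; exfalso.
  have sub : rideal mul (e b) \subset rideal mul (e a).
    apply/subsetP => x /imsetP [y _ ->]; rewrite -h -A; apply/imsetP; by exists (mul k y).
  have c := ord _ _ (ltnW ba).
  have eq : rideal mul (e b) = rideal mul (e a).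
    by apply/eqP; rewrite eqEcard sub c.
  by move: (inj _ _ (RT _ _ eq)) => eab; rewrite eab ltnn in ba.
have Iup k : upper (1%:M - Umx R mul e k).
  move=> a b ba; rewrite mxE [(- Umx _ _ _ _) a b]mxE (Uup k a b ba) subr0 mxE.
  by case: eqP => // h; rewrite h ltnn in ba.
pose P (a : 'I_#|T|) k := (k \in loopset mul sigma) == (k \in loopset mul (e a)).
have -> : Tsigma R mul e S sigma w =
  \big[mulmx/1%:M]_(k <- w) (if k \in loopset mul sigma then Umx R mul e k else 1%:M - Umx R mul e k).
  rewrite /Tsigma. apply: eq_big_seq. move=> k. move=> kw. rewrite in_setI.
  have kS : k \in S by rewrite -mem_enum -(perm_mem pw).
  by rewrite kS andbT.
have diag : forall k a, (if k \in loopset mul sigma then Umx R mul e k else 1%:M - Umx R mul e k) a a = (P a k)%:R.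
  move=> k a; rewrite /P [k \in loopset mul (e a)]inE; case: (k \in loopset mul sigma); rewrite ?mxE ?eqxx; case: (mul (e a) k == e a); rewrite /= ?subr0 ?subrr //.
have [_ ->] := @big_upper R _ T
  (fun k => if k \in loopset mul sigma then Umx R mul e k else 1%:M - Umx R mul e k) P w
  (fun k => if k \in loopset mul sigma as b return upper (if b then _ else _) then Uup k else Iup k) diag.
  have -> : all (P i) w = (loopset mul (e i) == loopset mul sigma).
    apply/allP/eqP => [H|E]; last by move=> k _; rewrite /P E eqxx.
    have HS k : k \in S -> P i k by move=> kS; apply: H; rewrite (perm_mem pw) mem_enum.
    have sub m m' : (forall k, k \in S -> (k \in loopset mul m) -> (k \in loopset mul m')) ->
        loopset mul m \subset loopset mul m'.
      move=> HH; apply/subsetP => x; rewrite inE => /eqP hx.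
      have [ws [wsS xw]] := gen x; subst x.
      rewrite inE; apply/eqP; apply: (word_loop monT).
      have := loop_word monT RT hx.
      move/allP => hw; apply/allP => y yw.
      have yS : y \in S by move/allP: wsS; apply.
      have := HH y yS; rewrite !inE; apply; exact: hw.
    apply/eqP; rewrite eqEsubset; apply/andP; split; apply: sub => k kS;
      by have := HS k kS; rewrite /P => /eqP ->.
  by case: eqP.
Qed.
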